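(* Let $T_1=\{12|3456,\,123|456,\,1234|56\}$, $T_2=\{13|2456,\,123|456,\,1235|46\}$, $T_3=\{13|2456,\,123|456,\,1234|56\}$, $T_4=\{12|3456,\,123|456,\,1235|46\}$ be binary trees on leaves $\{1,\dots,6\}$, and let $f=q_{GGGGGG}+q_{GTTTTG}-q_{GTGGTG}-q_{GGTTGG}$. Then for the JC model and for the K2P model, $f\in\mathcal{I}(V_{T_1}\ast V_{T_2})\setminus\mathcal{I}(V_{T_i})$ for $i\in\{3,4\}$. In particular $V_{T_i}\not\subseteq V_{T_1}\ast V_{T_2}$ for $i\in\{3,4\}$.
   Context: Trees are unrooted binary trees described by their nontrivial splits; $\Sigma(T)$ is the set of all splits of $T$ including trivial ones $\{i\}|[6]\setminus\{i\}$. With $G=\mathbb{Z}_2\times\mathbb{Z}_2$ and $A=(0,0)$, $C=(0,1)$, $G=(1,0)$, $T=(1,1)$, the K3P model on $T$ in Fourier coordinates $q_{g_1\cdots g_6}$ is $q_{g_1\cdots g_6}=\prod_{A|B\in\Sigma(T)}a^{A|B}_{\sum_{i\in A}g_i}$ if $\sum g_i=0$ and $0$ otherwise; K2P imposes $a^e_G=a^e_T$, JC imposes $a^e_C=a^e_G=a^e_T$ for all splits $e$. $V_T$ is the Zariski closure in $\mathbb{P}^{4^6-1}$ of the image for complex parameters; $V\ast W$ is the join (closure of the union of lines meeting $V$ and $W$); $\mathcal{I}(V)$ is the ideal of polynomials vanishing on $V$. *)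

(* Defs.v *)
From HB Require Import structures.
From mathcomp Require Import all_boot all_order all_algebra.
From mathcomp Require Import reals complex.
From mathcomp Require Import mpoly.
Set Implicit Arguments. Unset Strict Implicit. Unset Printing Implicit Defensive.
Import GRing.Theory Num.Theory.
Local Open Scope ring_scope.

Notation grp := ('Z_2 * 'Z_2)%type.
Definition nA : grp := (0, 0).
Definition nC : grp := (0, 1).
Definition nG : grp := (1, 0).
Definition nT : grp := (1, 1).

(* Leaves 1..6 are 'I_6 (leaf k is the ordinal k-1). *)
Definition leaf := 'I_6.
(* Words g_1 ... g_6 indexing the Fourier coordinates. *)
Definition word := {ffun leaf -> grp}.
Definition N := #|{: word}|.
Definition coord (w : word) : 'I_N := enum_rank w.

Notation CC R := (complex R).

(* Points of the affine cone C^(4^6) over P^(4^6-1), and polynomials. *)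
Notation point R := ('I_N -> CC R).
Notation poly R := (mpoly.mpoly N (CC R)).
Definition ev (R : realType) (p : poly R) (x : point R) : CC R := mpoly.meval x p.

(* A split A|B is represented by one side A (a subset of leaves). *)
Definition split := {set leaf}.
Definition Sigma (T : seq split) : seq split :=
  [seq [set i] | i <- enum leaf] ++ T.

Inductive model := JC | K2P | K3P.

Definition params (R : realType) := split -> grp -> CC R.

Definition model_constraint (R : realType) (m : model) (a : params R) : Prop :=
  match m with
  | K3P => True
  | K2P => forall e, a e nG = a e nT
  | JC => forall e, a e nC = a e nG /\ a e nG = a e nT
  end.

Definition qmap (R : realType) (T : seq split) (a : params R) : point R :=
  fun k => let w := enum_val k in
    if \sum_(i : leaf) w i == 0
    then \prod_(e <- Sigma T) a e (\sum_(i in e) w i)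
    else 0.

Definition ideal_of (R : realType) (V : point R -> Prop) : poly R -> Prop :=
  fun p => forall x, V x -> ev p x = 0.

Definition zclosure (R : realType) (S : point R -> Prop) : point R -> Prop :=
  fun x => forall p, ideal_of S p -> ev p x = 0.

Definition VT (R : realType) (m : model) (T : seq split) : point R -> Prop :=
  zclosure (fun x => exists a : params R, model_constraint m a /\ x = qmap T a).

Definition join (R : realType) (V W : point R -> Prop) : point R -> Prop :=
  zclosure (fun x => exists y z (l u : CC R), V y /\ W z /\ x = fun k => l * y k + u * z k).

Definition subset_pts (R : realType) (V W : point R -> Prop) : Prop :=
  forall x, V x -> W x.

(* The trees, via their nontrivial splits (leaf k written as ordinal k-1). *)
Definition L (k : nat) : leaf := inord k.
Definition T1 : seq split := [:: [set L 0; L 1]; [set L 0; L 1; L 2]; [set L 0; L 1; L 2; L 3]].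
Definition T2 : seq split := [:: [set L 0; L 2]; [set L 0; L 1; L 2]; [set L 0; L 1; L 2; L 4]].
Definition T3 : seq split := [:: [set L 0; L 2]; [set L 0; L 1; L 2]; [set L 0; L 1; L 2; L 3]].
Definition T4 : seq split := [:: [set L 0; L 1]; [set L 0; L 1; L 2]; [set L 0; L 1; L 2; L 4]].

Definition mkw (g1 g2 g3 g4 g5 g6 : grp) : word :=
  [ffun i : leaf => nth nA [:: g1; g2; g3; g4; g5; g6] i].
Definition q (R : realType) (w : word) : poly R := mpoly.mpolyX (CC R) (mpoly.mnm1 (coord w)).

Definition f (R : realType) : poly R :=
  q R (mkw nG nG nG nG nG nG) + q R (mkw nG nT nT nT nT nG)
  - q R (mkw nG nT nG nG nT nG) - q R (mkw nG nG nT nT nG nG).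

(* Main.v *)
Require Import Defs.
From mathcomp Require Import all_boot all_algebra reals complex mpoly.
From mathcomp Require Import ring.
Import GRing.Theory.
Local Open Scope ring_scope.

Lemma L0 : L 0 = @Ordinal 6 0 isT. Proof. by apply/val_inj; rewrite /= inordK. Qed.
Lemma L1 : L 1 = @Ordinal 6 1 isT. Proof. by apply/val_inj; rewrite /= inordK. Qed.
Lemma L2 : L 2 = @Ordinal 6 2 isT. Proof. by apply/val_inj; rewrite /= inordK. Qed.
Lemma L3 : L 3 = @Ordinal 6 3 isT. Proof. by apply/val_inj; rewrite /= inordK. Qed.
Lemma L4 : L 4 = @Ordinal 6 4 isT. Proof. by apply/val_inj; rewrite /= inordK. Qed.
Ltac sumtac := apply/eqP; rewrite big_mkcond /= !big_ord_recl big_ord0 !inE !ffunE ?L0 ?L1 ?L2 ?L3 ?L4; vm_compute; reflexivity.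

Definition w1 := mkw nG nG nG nG nG nG.
Definition w2 := mkw nG nT nT nT nT nG.
Definition w3 := mkw nG nT nG nG nT nG.
Definition w4 := mkw nG nG nT nT nG nG.
Definition s12 : Defs.split := [set L 0; L 1].
Definition s123 : Defs.split := [set L 0; L 1; L 2].
Definition s1234 : Defs.split := [set L 0; L 1; L 2; L 3].
Definition s13 : Defs.split := [set L 0; L 2].
Definition s1235 : Defs.split := [set L 0; L 1; L 2; L 4].

Lemma e12_1 : \sum_(i in s12) w1 i = nA. Proof. sumtac. Qed.
Lemma e12_2 : \sum_(i in s12) w2 i = nC. Proof. sumtac. Qed.
Lemma e12_3 : \sum_(i in s12) w3 i = nC. Proof. sumtac. Qed.
Lemma e12_4 : \sum_(i in s12) w4 i = nA. Proof. sumtac. Qed.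
Lemma e123_1 : \sum_(i in s123) w1 i = nG. Proof. sumtac. Qed.
Lemma e123_2 : \sum_(i in s123) w2 i = nG. Proof. sumtac. Qed.
Lemma e123_3 : \sum_(i in s123) w3 i = nT. Proof. sumtac. Qed.
Lemma e123_4 : \sum_(i in s123) w4 i = nT. Proof. sumtac. Qed.
Lemma e1234_1 : \sum_(i in s1234) w1 i = nA. Proof. sumtac. Qed.
Lemma e1234_2 : \sum_(i in s1234) w2 i = nC. Proof. sumtac. Qed.
Lemma e1234_3 : \sum_(i in s1234) w3 i = nC. Proof. sumtac. Qed.
Lemma e1234_4 : \sum_(i in s1234) w4 i = nA. Proof. sumtac. Qed.
Lemma e13_1 : \sum_(i in s13) w1 i = nA. Proof. sumtac. Qed.
Lemma e13_2 : \sum_(i in s13) w2 i = nC. Proof. sumtac. Qed.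
Lemma e13_3 : \sum_(i in s13) w3 i = nA. Proof. sumtac. Qed.
Lemma e13_4 : \sum_(i in s13) w4 i = nC. Proof. sumtac. Qed.
Lemma e1235_1 : \sum_(i in s1235) w1 i = nA. Proof. sumtac. Qed.
Lemma e1235_2 : \sum_(i in s1235) w2 i = nC. Proof. sumtac. Qed.
Lemma e1235_3 : \sum_(i in s1235) w3 i = nA. Proof. sumtac. Qed.
Lemma e1235_4 : \sum_(i in s1235) w4 i = nC. Proof. sumtac. Qed.

Ltac tottac := rewrite !big_ord_recl big_ord0 !ffunE; vm_compute; reflexivity.
Lemma tot1 : \sum_(i : leaf) w1 i == 0. Proof. tottac. Qed.
Lemma tot2 : \sum_(i : leaf) w2 i == 0. Proof. tottac. Qed.
Lemma tot3 : \sum_(i : leaf) w3 i == 0. Proof. tottac. Qed.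
Lemma tot4 : \sum_(i : leaf) w4 i == 0. Proof. tottac. Qed.

Ltac gttac := let i := fresh "i" in let Hi := fresh "Hi" in
  case=> [[|[|[|[|[|[|i]]]]]] Hi] //; rewrite ffunE /=;
  first [by left; apply/eqP; vm_compute; reflexivity
        | by right; apply/eqP; vm_compute; reflexivity].
Lemma gt1 : forall i, w1 i = nG \/ w1 i = nT. Proof. gttac. Qed.
Lemma gt2 : forall i, w2 i = nG \/ w2 i = nT. Proof. gttac. Qed.
Lemma gt3 : forall i, w3 i = nG \/ w3 i = nT. Proof. gttac. Qed.
Lemma gt4 : forall i, w4 i = nG \/ w4 i = nT. Proof. gttac. Qed.

Lemma qmap_coord (R : realType) (T : seq Defs.split) (a : params R) (w : word) :
  \sum_(i : leaf) w i == 0 -> (forall i, w i = nG \/ w i = nT) ->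
  (forall e, a e nG = a e nT) ->
  qmap T a (Defs.coord w) = (\prod_(i : leaf) a [set i] nG) * \prod_(e <- T) a e (\sum_(i in e) w i).
Proof.
move=> Hs Hg Ha; rewrite /qmap /Defs.coord enum_rankK Hs big_cat big_map /=.
congr (_ * _); rewrite big_enum /=; apply: eq_bigr => i _.
by rewrite big_set1; case: (Hg i) => ->.
Qed.

Lemma evf (R : realType) (x : point R) :
  ev (f R) x = x (Defs.coord w1) + x (Defs.coord w2) - x (Defs.coord w3) - x (Defs.coord w4).
Proof. by rewrite /ev /f !mevalB mevalD /q !mevalXU. Qed.

Lemma constrK2P (R : realType) (m : model) (a : params R) :
  m = JC \/ m = K2P -> model_constraint m a -> forall e, a e nG = a e nT.
Proof. by case=> -> /= H e; case: (H e). Qed.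

Lemma part1 (R : realType) (m : model) :
  m = JC \/ m = K2P ->
  ideal_of (join (@VT R m T1) (@VT R m T2)) (f R).
Proof.
move=> Hm x Hx; apply: Hx => _ [y [z [l [u [Hy [Hz ->]]]]]].
have ey : ev (f R) y = 0.
  apply: Hy => _ [a [Ha ->]]; have K := @constrK2P R m a Hm Ha.
  rewrite evf !qmap_coord ?tot1 ?tot2 ?tot3 ?tot4 //; try exact: gt1; try exact: gt2;
    try exact: gt3; try exact: gt4.
  rewrite /T1 !big_cons !big_nil -/s12 -/s123 -/s1234.
  rewrite e12_1 e12_2 e12_3 e12_4 e123_1 e123_2 e123_3 e123_4
          e1234_1 e1234_2 e1234_3 e1234_4 K; ring.
have ez : ev (f R) z = 0.
  apply: Hz => _ [a [Ha ->]]; have K := @constrK2P R m a Hm Ha.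
  rewrite evf !qmap_coord ?tot1 ?tot2 ?tot3 ?tot4 //; try exact: gt1; try exact: gt2;
    try exact: gt3; try exact: gt4.
  rewrite /T2 !big_cons !big_nil -/s13 -/s123 -/s1235.
  rewrite e13_1 e13_2 e13_3 e13_4 e123_1 e123_2 e123_3 e123_4
          e1235_1 e1235_2 e1235_3 e1235_4 K; ring.
move: ey ez; rewrite !evf => ey ez.
transitivity (l * (y (Defs.coord w1) + y (Defs.coord w2) - y (Defs.coord w3) - y (Defs.coord w4))
            + u * (z (Defs.coord w1) + z (Defs.coord w2) - z (Defs.coord w3) - z (Defs.coord w4))).
  ring.
by rewrite ey ez !mulr0 addr0.
Qed.

Theorem lemma5 (R : realType) (m : model) :
  m = JC \/ m = K2P ->
  ideal_of (join (@VT R m T1) (@VT R m T2)) (f R) /\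
  (forall T, T = T3 \/ T = T4 ->
     ~ ideal_of (@VT R m T) (f R) /\
     ~ subset_pts (@VT R m T) (join (@VT R m T1) (@VT R m T2))).
Proof.
move=> Hm; split; first exact: part1.
move=> T HT.
pose a0 : params R := fun _ g => if g == nA then 2 else 1.
have Ha0 : model_constraint m a0 by case: Hm => ->.
have Hx0 : VT m T (qmap T a0) by move=> p Hp; apply: Hp; exists a0.
have K := @constrK2P R m a0 Hm Ha0.
have ef : ev (f R) (qmap T a0) = 1.
  rewrite evf !qmap_coord ?tot1 ?tot2 ?tot3 ?tot4 //; try exact: gt1; try exact: gt2;
    try exact: gt3; try exact: gt4.
  have nGA : (nG == nA) = false by [].
  rewrite big1; last by move=> i _; rewrite /a0 nGA.
  case: HT => ->.
  - rewrite /T3 !big_cons !big_nil -/s13 -/s123 -/s1234.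
    rewrite e13_1 e13_2 e13_3 e13_4 e123_1 e123_2 e123_3 e123_4
            e1234_1 e1234_2 e1234_3 e1234_4 /a0 /=; ring.
  - rewrite /T4 !big_cons !big_nil -/s12 -/s123 -/s1235.
    rewrite e12_1 e12_2 e12_3 e12_4 e123_1 e123_2 e123_3 e123_4
            e1235_1 e1235_2 e1235_3 e1235_4 /a0 /=; ring.
split.
- by move=> H; have := H _ Hx0; rewrite ef; apply/eqP; exact: oner_neq0.
- move=> H; have := @part1 R m Hm _ (H _ Hx0); rewrite ef; apply/eqP; exact: oner_neq0.
Qed.
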